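(* Let $\theta\in\mathbb{R}$, $q=e^{2\pi i\theta}$, let $A_\theta$ be the unital $\mathbb{C}$-algebra generated by invertible $U,V$ with $UV=qVU$, and let $R=\mathbb{C}[U,U^{-1}]\subset A_\theta$ with $\mathfrak s=\mathfrak t:R\to A_\theta$ the inclusion. Define $\Delta(U^nV^m)=U^nV^m\otimes_R V^m$ and $\varepsilon(U^nV^m)=U^n$ (extended linearly). Then: (1) $(A_\theta,\mathfrak s,\mathfrak t,\Delta,\varepsilon)$ is a left $\times_R$-Hopf algebra, i.e. a left $R$-bialgebroid for which $\nu:A_\theta\otimes_{R^{op}}A_\theta\to A_\theta\otimes_R A_\theta$, $k\otimes k'\mapsto k_{(1)}\otimes_R k_{(2)}k'$, is bijective; (2) the map $\delta:A_\theta\to R$, $\delta(U^nV^m)=q^{nm}U^n$, is a right character; (3) $R$ with the right action $U^k\triangleleft U^nV^m=q^{(k+n)m}U^{k+n}$ and the coaction $U^n\mapsto U^n\otimes_R1$ is a right-left SAYD module ${}^1R_\delta$ over $A_\theta$.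
   Context: A left $R$-bialgebroid is a $\mathbb{C}$-algebra $\mathcal K$ with algebra maps $\mathfrak s:R\to\mathcal K$, $\mathfrak t:R^{op}\to\mathcal K$ with commuting ranges, $R$-bimodule structure $r_1\cdot k\cdot r_2=\mathfrak s(r_1)\mathfrak t(r_2)k$, and $R$-bimodule maps $\Delta(k)=k_{(1)}\otimes_R k_{(2)}$, $\varepsilon:\mathcal K\to R$ forming a coassociative counital $R$-coring, with $k_{(1)}\mathfrak t(r)\otimes_R k_{(2)}=k_{(1)}\otimes_R k_{(2)}\mathfrak s(r)$, $\Delta(1)=1\otimes_R1$, $\Delta(kk')=k_{(1)}k'_{(1)}\otimes_R k_{(2)}k'_{(2)}$, $\varepsilon(1)=1_R$, $\varepsilon(kk')=\varepsilon(k\mathfrak s(\varepsilon(k')))$. It is a left $\times_R$-Hopf algebra if $\nu$ (domain balanced by $k\mathfrak t(r)\otimes k'=k\otimes\mathfrak t(r)k'$) is bijective; write $\nu^{-1}(k\otimes_R1)=k^-\otimes_{R^{op}}k^+$. A right character is a map $\delta:\mathcal K\to R$ with $\delta(k\mathfrak s(r))=\delta(k)r$, $\delta(k_1k_2)=\delta(\mathfrak s(\delta(k_1))k_2)$, $\delta(1)=1_R$. A right-left SAYD module over $\mathcal K$: a right $\mathcal K$-module and left $\mathcal K$-comodule $M$ (coaction $m\mapsto m_{(-1)}\otimes_R m_{(0)}$, left $R$-linear, coassociative, counital) with left $R$-action $r\cdot m=m\mathfrak t(r)$ and $\varepsilon(m_{(-1)}\mathfrak s(r))\cdot m_{(0)}=m\mathfrak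 s(r)$, satisfying $(mk)_{(-1)}\otimes_R(mk)_{(0)}=k_{(2)}{}^{+}m_{(-1)}k_{(1)}\otimes_R m_{(0)}k_{(2)}{}^{-}$ and $m_{(0)}m_{(-1)}=m$. *)

(* Defs.v *)
From HB Require Import structures.
From mathcomp Require Import all_boot all_order all_algebra.
Set Implicit Arguments.
Unset Strict Implicit.
Unset Printing Implicit Defensive.
Import Order.TTheory GRing.Theory Num.Theory.
Local Open Scope ring_scope.

(* Balanced tensor products, represented by finite formal sums of pairs.    *)
(* Two formal sums w1, w2 : seq (X * Y) denote the same element of the      *)
(* tensor product  X (x)_R Y  (X a right R-module via ra, Y a left          *)
(* R-module via la, everything K-linear) iff every K-bilinear R-balanced    *)
(* K-valued form takes the same value on them (linear forms separate the    *)
(* points of the K-vector space X (x)_R Y).                                  *)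
Section Tensor.
Variables (K : fieldType) (X Y : lmodType K) (R : Type).
Variables (ra : X -> R -> X) (la : R -> Y -> Y).

Definition bal2 (f : X -> Y -> K) : Prop :=
  [/\ forall y a x1 x2, f (a *: x1 + x2) y = a * f x1 y + f x2 y,
      forall x a y1 y2, f x (a *: y1 + y2) = a * f x y1 + f x y2 &
      forall x r y, f (ra x r) y = f x (la r y)].

Definition teval (f : X -> Y -> K) (w : seq (X * Y)) : K :=
  \sum_(p <- w) f p.1 p.2.

Definition teq (w1 w2 : seq (X * Y)) : Prop :=
  forall f, bal2 f -> teval f w1 = teval f w2.

Definition tscale (a : K) (w : seq (X * Y)) : seq (X * Y) :=
  [seq (a *: p.1, p.2) | p <- w].
End Tensor.

Section Tensor3.
Variables (K : fieldType) (X Y Z : lmodType K) (R : Type).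
Variables (ra1 : X -> R -> X) (la1 : R -> Y -> Y).
Variables (ra2 : Y -> R -> Y) (la2 : R -> Z -> Z).

Definition bal3 (f : X -> Y -> Z -> K) : Prop :=
  [/\ forall y z a x1 x2, f (a *: x1 + x2) y z = a * f x1 y z + f x2 y z,
      forall x z a y1 y2, f x (a *: y1 + y2) z = a * f x y1 z + f x y2 z,
      forall x y a z1 z2, f x y (a *: z1 + z2) = a * f x y z1 + f x y z2,
      forall x r y z, f (ra1 x r) y z = f x (la1 r y) z &
      forall x y r z, f x (ra2 y r) z = f x y (la2 r z)].
End Tensor3.

Definition is_basis (K : fieldType) (V : lmodType K) (I : eqType)
    (b : I -> V) : Prop :=
  (forall v : V, exists (S : seq I) (c : I -> K), v = \sum_(i <- S) c i *: b i)
  /\ (forall (S : seq I) (c : I -> K), uniq S ->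
        \sum_(i <- S) c i *: b i = 0 -> forall i, i \in S -> c i = 0).

Definition klinear (K : fieldType) (V W : lmodType K) (f : V -> W) : Prop :=
  forall a x y, f (a *: x + y) = a *: f x + f y.

Definition kbilinear (K : fieldType) (V W Z : lmodType K)
    (f : V -> W -> Z) : Prop :=
  (forall w a x y, f (a *: x + y) w = a *: f x w + f y w) /\
  (forall v a x y, f v (a *: x + y) = a *: f v x + f v y).

Section Bialgebroid.
Variables (K : fieldType) (R A : algType K).
Variables (s t : R -> A) (Dl : A -> seq (A * A)) (eps : A -> R).

(* A (x)_R A : right R-action on the first factor k.r = t(r) k,
   left R-action on the second factor r.k = s(r) k. *)
Definition raR (k : A) (r : R) : A := t r * k.
Definition laR (r : R) (k : A) : A := s r * k.
Definition teqR := @teq K A A R raR laR.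

Definition raRop (k : A) (r : R) : A := k * t r.
Definition laRop (r : R) (k : A) : A := t r * k.
Definition teqRop := @teq K A A R raRop laRop.

Definition bal3R := @bal3 K A A A R raR laR raR laR.

Definition is_algmap (f : R -> A) : Prop :=
  [/\ klinear f, forall x y, f (x * y) = f x * f y & f 1 = 1].

Definition is_antialgmap (f : R -> A) : Prop :=
  [/\ klinear f, forall x y, f (x * y) = f y * f x & f 1 = 1].

Record left_bialgebroid : Prop := {
  lb_s : is_algmap s;
  lb_t : is_antialgmap t;
  lb_comm : forall r r', s r * t r' = t r' * s r;
  lb_D_lin : forall a k k', teqR (Dl (a *: k + k')) (tscale a (Dl k) ++ Dl k');
  lb_D_bimod : forall r1 r2 k,
    teqR (Dl (s r1 * t r2 * k)) [seq (s r1 * p.1, t r2 * p.2) | p <- Dl k];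
  lb_e_lin : klinear eps;
  lb_e_bimod : forall r1 r2 k, eps (s r1 * t r2 * k) = r1 * eps k * r2;
  lb_coassoc : forall k f, bal3R f ->
    \sum_(p <- Dl k) \sum_(p' <- Dl p.1) f p'.1 p'.2 p.2 =
    \sum_(p <- Dl k) \sum_(p' <- Dl p.2) f p.1 p'.1 p'.2;
  lb_counit_l : forall k, \sum_(p <- Dl k) s (eps p.1) * p.2 = k;
  lb_counit_r : forall k, \sum_(p <- Dl k) t (eps p.2) * p.1 = k;
  lb_takeuchi : forall k r,
    teqR [seq (p.1 * t r, p.2) | p <- Dl k] [seq (p.1, p.2 * s r) | p <- Dl k];
  lb_D1 : teqR (Dl 1) [:: (1, 1)];
  lb_Dmul : forall k k',
    teqR (Dl (k * k')) [seq (p.1 * p'.1, p.2 * p'.2) | p <- Dl k, p' <- Dl k'];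
  lb_e1 : eps 1 = 1;
  lb_emul : forall k k', eps (k * k') = eps (k * s (eps k'))
}.

Definition nu (w : seq (A * A)) : seq (A * A) :=
  [seq (p'.1, p'.2 * p.2) | p <- w, p' <- Dl p.1].

Definition nu_bijective : Prop :=
  [/\ (forall w w', teqRop w w' -> teqR (nu w) (nu w')),
      (forall w w', teqR (nu w) (nu w') -> teqRop w w') &
      (forall z, exists w, teqR (nu w) z)].

Definition left_xR_Hopf : Prop := left_bialgebroid /\ nu_bijective.

Record right_character (d : A -> R) : Prop := {
  rc_s : forall k r, d (k * s r) = d k * r;
  rc_mul : forall k1 k2, d (k1 * k2) = d (s (d k1) * k2);
  rc_1 : d 1 = 1
}.

Section SAYD.
Variables (M : lmodType K) (act : M -> A -> M) (rho : M -> seq (A * M)).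

Definition laM (r : R) (m : M) : M := act m (t r).
Definition teqM := @teq K A M R raR laM.
Definition bal3M := @bal3 K A A M R raR laR raR laM.

Record SAYD : Prop := {
  sa_act_bilin : kbilinear act;
  sa_act1 : forall m, act m 1 = m;
  sa_actM : forall m k k', act (act m k) k' = act m (k * k');
  sa_rho_lin : forall a m m', teqM (rho (a *: m + m')) (tscale a (rho m) ++ rho m');
  sa_rho_Rlin : forall r m, teqM (rho (laM r m)) [seq (s r * p.1, p.2) | p <- rho m];
  sa_coassoc : forall m f, bal3M f ->
    \sum_(p <- rho m) \sum_(p' <- Dl p.1) f p'.1 p'.2 p.2 =
    \sum_(p <- rho m) \sum_(p' <- rho p.2) f p.1 p'.1 p'.2;
  sa_counit : forall m, \sum_(p <- rho m) laM (eps p.1) p.2 = m;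
  sa_eps : forall m r, \sum_(p <- rho m) laM (eps (p.1 * s r)) p.2 = act m (s r);
  (* anti Yetter-Drinfeld condition, with k^- (x) k^+ = nu^{-1}(k (x) 1) *)
  sa_AYD : forall nuinv : A -> seq (A * A),
    (forall k, teqR (nu (nuinv k)) [:: (k, 1)]) ->
    forall m k,
      teqM (rho (act m k))
        (flatten [seq [seq (p2.2 * pm.1 * p.1, act pm.2 p2.1)
                         | p2 <- nuinv p.2, pm <- rho m] | p <- Dl k]);
  sa_stable : forall m, \sum_(p <- rho m) act p.2 p.1 = m
}.
End SAYD.
End Bialgebroid.

(* Main.v *)
Require Import Defs.
From HB Require Import structures.
From mathcomp Require Import all_boot all_order all_algebra.
From mathcomp Require Import ring.
From Stdlib Require Import ClassicalEpsilon.
Import GRing.Theory.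
Set Implicit Arguments.
Unset Strict Implicit.
Unset Printing Implicit Defensive.
Local Open Scope ring_scope.

Section Lin.
Variables (K : fieldType) (V W : lmodType K).

Lemma klin0 (f : V -> W) : klinear f -> f 0 = 0.
Proof.
move=> hf; have := hf 1 0 0; rewrite scale1r addr0 scale1r => e.
by apply: (addrI (f 0)); rewrite addr0 -e.
Qed.

Lemma klinD (f : V -> W) : klinear f -> forall x y, f (x + y) = f x + f y.
Proof. by move=> hf x y; have := hf 1 x y; rewrite !scale1r. Qed.

Lemma klinZ (f : V -> W) : klinear f -> forall a x, f (a *: x) = a *: f x.
Proof. by move=> hf a x; rewrite -[a *: x]addr0 hf klin0 // addr0. Qed.

Lemma klin_sum (f : V -> W) : klinear f -> forall (I : Type) (r : seq I) (F : I -> V),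
  f (\sum_(i <- r) F i) = \sum_(i <- r) f (F i).
Proof.
move=> hf I r F; elim: r => [|x r IH]; first by rewrite !big_nil klin0.
by rewrite !big_cons klinD // IH.
Qed.

End Lin.
Section LinK.
Variables (K : fieldType) (V : lmodType K).
Definition lin (f : V -> K) := forall a x y, f (a *: x + y) = a * f x + f y.

Lemma lin_klin (f : V -> K) : lin f -> klinear (f : V -> K^o).
Proof. by []. Qed.

Lemma lin0 f : lin f -> f 0 = 0.
Proof. move=> h; exact (@klin0 K V K^o f h). Qed.
Lemma linD f : lin f -> forall x y, f (x + y) = f x + f y.
Proof. move=> h; exact (@klinD K V K^o f h). Qed.
Lemma linZ f : lin f -> forall a x, f (a *: x) = a * f x.
Proof. move=> h; exact (@klinZ K V K^o f h). Qed.
Lemma lin_sum f : lin f -> forall (I : Type) (r : seq I) (F : I -> V),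
  f (\sum_(i <- r) F i) = \sum_(i <- r) f (F i).
Proof. move=> h; exact (@klin_sum K V K^o f h). Qed.
Lemma linN f : lin f -> forall x, f (- x) = - f x.
Proof. by move=> h x; rewrite -scaleN1r linZ // mulN1r. Qed.

End LinK.

Section Basis.
Variables (K : fieldType) (V : lmodType K) (I : eqType) (b : I -> V).

Section Span.
Hypothesis hspan : forall v : V, exists (S : seq I) (c : I -> K), v = \sum_(i <- S) c i *: b i.

Lemma ext_basis (W : lmodType K) (f1 f2 : V -> W) : klinear f1 -> klinear f2 ->
  (forall i, f1 (b i) = f2 (b i)) -> forall v, f1 v = f2 v.
Proof.
move=> h1 h2 hb v; have [S [c ->]] := hspan v.
rewrite !klin_sum //; apply: eq_bigr => i _; by rewrite !klinZ // hb.
Qed.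

Lemma ext_basisK (f1 f2 : V -> K) : lin f1 -> lin f2 ->
  (forall i, f1 (b i) = f2 (b i)) -> forall v, f1 v = f2 v.
Proof. move=> h1 h2; exact (@ext_basis (GRing.regular K) f1 f2 h1 h2). Qed.
End Span.

Lemma big_ext0 (W : zmodType) (S T : seq I) (G : I -> W) : uniq S -> uniq T ->
  {subset S <= T} -> \sum_(i <- S) G i = \sum_(i <- T) (if i \in S then G i else 0).
Proof.
move=> uS uT sST; rewrite -big_mkcond /= -[in RHS]big_filter.
apply: perm_big; apply: uniq_perm => //; first exact: filter_uniq.
by move=> i; rewrite mem_filter; case iS: (i \in S) => //=; rewrite sST.
Qed.

Lemma big_pred1_useq (W : zmodType) (S : seq I) (j : I) (F : I -> W) : uniq S -> j \in S ->
  \sum_(i <- S | i == j) F i = F j.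
Proof.
move=> uS jS; rewrite -big_filter.
have -> : [seq i <- S | i == j] = [:: j] by apply: (filter_pred1_uniq uS jS).
by rewrite big_seq1.
Qed.

Hypothesis hb : is_basis b.

Lemma dec_uniq v : exists (S : seq I) (c : I -> K), uniq S /\ v = \sum_(i <- S) c i *: b i.
Proof.
have [S [c ->]] := hb.1 v; elim: S => [|j S IH].
  by exists [::], c; rewrite !big_nil.
rewrite big_cons; have [S' [c' [uS' ->]]] := IH; case jS: (j \in S').
  exists S', (fun i => c' i + (if i == j then c j else 0)); split => //.
  rewrite [RHS](eq_bigr (fun i => c' i *: b i + (if i == j then c j *: b j else 0))); last first.
    by move=> i _; rewrite scalerDl; case: eqP => [->|]; rewrite ?scale0r.
  by rewrite big_split /= -big_mkcond /= big_pred1_useq // addrC.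
exists (j :: S'), (fun i => if i == j then c j else c' i); split; first by rewrite /= jS.
rewrite big_cons eqxx; congr (_ + _); apply: eq_big_seq => i iS.
by case: eqP => // eij; rewrite -eij iS in jS.
Qed.

Definition cext (S : seq I) (c : I -> K) i := if i \in S then c i else 0.

Lemma sum_cext S T c : uniq S -> uniq T -> {subset S <= T} ->
  \sum_(i <- S) c i *: b i = \sum_(i <- T) cext S c i *: b i.
Proof.
move=> uS uT sST; rewrite (big_ext0 _ uS uT sST); apply: eq_bigr => i _.
by rewrite /cext; case: (i \in S); rewrite ?scale0r.
Qed.

Lemma sum_cextK S T c (F : I -> K) : uniq S -> uniq T -> {subset S <= T} ->
  \sum_(i <- S) c i * F i = \sum_(i <- T) cext S c i * F i.
Proof.
move=> uS uT sST; rewrite (big_ext0 _ uS uT sST); apply: eq_bigr => i _.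
by rewrite /cext; case: (i \in S); rewrite ?mul0r.
Qed.

Lemma dec_eq S c S' c' : uniq S -> uniq S' ->
  \sum_(i <- S) c i *: b i = \sum_(i <- S') c' i *: b i ->
  forall i, cext S c i = cext S' c' i.
Proof.
move=> uS uS' he i.
set T := undup (S ++ S').
have uT : uniq T by exact: undup_uniq.
have sS : {subset S <= T} by move=> x xS; rewrite mem_undup mem_cat xS.
have sS' : {subset S' <= T} by move=> x xS; rewrite mem_undup mem_cat xS orbT.
have h0 : \sum_(i <- T) (cext S c i - cext S' c' i) *: b i = 0.
  under eq_bigr do rewrite scalerBl.
  by rewrite sumrB -sum_cext // -sum_cext // he subrr.
case iT: (i \in T); last first.
  rewrite /cext; case iS: (i \in S); first by rewrite sS in iT.
  by case iS': (i \in S') => //; rewrite sS' in iT.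
by apply/eqP; rewrite -subr_eq0; apply/eqP; apply: (hb.2 T _ uT h0).
Qed.

Definition dec_of (v : V) : seq I * (I -> K) :=
  let H := constructive_indefinite_description _ (dec_uniq v) in
  (proj1_sig H, proj1_sig (constructive_indefinite_description _ (proj2_sig H))).

Lemma dec_ofP v : uniq (dec_of v).1 /\ v = \sum_(i <- (dec_of v).1) (dec_of v).2 i *: b i.
Proof.
rewrite /dec_of; case: (constructive_indefinite_description _ _) => S /= H.
by case: (constructive_indefinite_description _ _).
Qed.

Definition linext (phi : I -> K) (v : V) : K :=
  \sum_(i <- (dec_of v).1) (dec_of v).2 i * phi i.

Lemma linextE phi S c : uniq S -> linext phi (\sum_(i <- S) c i *: b i) = \sum_(i <- S) c i * phi i.
Proof.
move=> uS; rewrite /linext; set v := \sum_(i <- S) _.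
have [u1 e1] := dec_ofP v; set S1 := (dec_of v).1 in u1 e1 *; set c1 := (dec_of v).2 in e1 *.
set T := undup (S1 ++ S).
have uT : uniq T by exact: undup_uniq.
have sS : {subset S1 <= T} by move=> x xS; rewrite mem_undup mem_cat xS.
have sS' : {subset S <= T} by move=> x xS; rewrite mem_undup mem_cat xS orbT.
rewrite (@sum_cextK S1 T c1 phi u1 uT sS) (@sum_cextK S T c phi uS uT sS'); apply: eq_bigr => i _.
by rewrite (dec_eq u1 uS (esym e1)).
Qed.

Lemma linext_b phi i : linext phi (b i) = phi i.
Proof.
have -> : b i = \sum_(j <- [:: i]) 1 *: b j by rewrite big_seq1 scale1r.
by rewrite linextE // big_seq1 mul1r.
Qed.

Lemma linext_lin phi : lin (linext phi).
Proof.
move=> a x y.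
have [u1 e1] := dec_ofP x; set S1 := (dec_of x).1 in u1 e1 *; set c1 := (dec_of x).2 in e1 *.
have [u2 e2] := dec_ofP y; set S2 := (dec_of y).1 in u2 e2 *; set c2 := (dec_of y).2 in e2 *.
set T := undup (S1 ++ S2).
have uT : uniq T by exact: undup_uniq.
have sS : {subset S1 <= T} by move=> z zS; rewrite mem_undup mem_cat zS.
have sS' : {subset S2 <= T} by move=> z zS; rewrite mem_undup mem_cat zS orbT.
rewrite e1 e2 (@sum_cext S1 T c1 u1 uT sS) (@sum_cext S2 T c2 u2 uT sS').
have -> : a *: \sum_(i <- T) cext S1 c1 i *: b i + \sum_(i <- T) cext S2 c2 i *: b i
  = \sum_(i <- T) (a * cext S1 c1 i + cext S2 c2 i) *: b i.
  rewrite scaler_sumr -big_split /=; apply: eq_bigr => i _.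
  by rewrite scalerDl scalerA.
rewrite !linextE // mulr_sumr -big_split /=; apply: eq_bigr => i _.
by rewrite mulrDl mulrA.
Qed.

Lemma sep (v w : V) : (forall F : V -> K, lin F -> F v = F w) -> v = w.
Proof.
move=> hF; apply/eqP; rewrite -subr_eq0; apply/eqP.
have [u1 e1] := dec_ofP (v - w); set S1 := (dec_of _).1 in u1 e1 *; set c1 := (dec_of _).2 in e1 *.
have hc : forall i, i \in S1 -> c1 i = 0.
  move=> i iS; have := hF (linext (fun j => (j == i)%:R)) (linext_lin _).
  move/eqP; rewrite -subr_eq0 -(linN (linext_lin _)) -(linD (linext_lin _)).
  rewrite e1 linextE // (eq_bigr (fun j => if j == i then c1 j else 0)).
    by rewrite -big_mkcond /= big_pred1_useq // => /eqP.
  by move=> j _; case: eqP; rewrite ?mulr1 ?mulr0.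
rewrite e1 big1_seq // => i /andP [_ iS]; by rewrite hc // scale0r.
Qed.

End Basis.

Section Pow.
Variables (K : fieldType) (A : unitAlgType K).

Lemma exprzZ (k : K) (x : A) (n : int) : k \is a GRing.unit -> x \is a GRing.unit ->
  (k *: x) ^ n = k ^ n *: x ^ n.
Proof.
move=> hk hx; case: n => n; first exact: exprZn.
by rewrite /exprz exprZn invrZ ?unitrX.
Qed.

Lemma conjXn (x y : A) (n : nat) : x \is a GRing.unit ->
  (x * y * x^-1) ^+ n = x * y ^+ n * x^-1.
Proof.
move=> hx; elim: n => [|n IH]; first by rewrite !expr0 mulr1 mulrV.
by rewrite exprS IH !mulrA mulrVK // exprS !mulrA.
Qed.

Lemma conjXz (x y : A) (n : int) : x \is a GRing.unit -> y \is a GRing.unit ->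
  (x * y * x^-1) ^ n = x * y ^ n * x^-1.
Proof.
move=> hx hy; case: n => n; first exact: conjXn.
rewrite /exprz conjXn // !invrM ?unitrV ?unitrX ?unitrMl ?unitrX //.
by rewrite invrK mulrA.
Qed.
End Pow.

Section TevalGen.
Variables (K : fieldType) (X Y : lmodType K) (Rr : Type).
Variables (ra : X -> Rr -> X) (la : Rr -> Y -> Y).

Lemma bal_l (f : X -> Y -> K) : bal2 ra la f -> forall y, lin (fun x => f x y).
Proof. by case=> h1 _ _ y a x1 x2; rewrite h1. Qed.
Lemma bal_r (f : X -> Y -> K) : bal2 ra la f -> forall x, lin (fun y => f x y).
Proof. by case=> _ h2 _ x a x1 x2; rewrite h2. Qed.
Lemma bal_b (f : X -> Y -> K) : bal2 ra la f -> forall x r y, f (ra x r) y = f x (la r y).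
Proof. by case. Qed.

Lemma teval_cat (f : X -> Y -> K) w1 w2 : teval f (w1 ++ w2) = teval f w1 + teval f w2.
Proof. by rewrite /teval big_cat. Qed.

Lemma teval_tscale (f : X -> Y -> K) a w : bal2 ra la f -> teval f (tscale a w) = a * teval f w.
Proof.
move=> hf; rewrite /teval /tscale big_map mulr_sumr; apply: eq_bigr => p _ /=.
by rewrite (linZ (bal_l hf p.2)).
Qed.

Lemma teval_map (f : X -> Y -> K) (h1 : X -> X) (h2 : Y -> Y) w :
  teval f [seq (h1 p.1, h2 p.2) | p <- w] = teval (fun x y => f (h1 x) (h2 y)) w.
Proof. by rewrite /teval big_map. Qed.

Lemma teval_nil (f : X -> Y -> K) : teval f [::] = 0.
Proof. by rewrite /teval big_nil. Qed.
Lemma teval_seq1 (f : X -> Y -> K) x y : teval f [:: (x, y)] = f x y.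
Proof. by rewrite /teval big_seq1. Qed.

Lemma bal2_intro (f : X -> Y -> K) : (forall y, lin (fun x => f x y)) ->
  (forall x, lin (fun y => f x y)) -> (forall x r y, f (ra x r) y = f x (la r y)) ->
  bal2 ra la f.
Proof. by move=> h1 h2 h3; split => *; rewrite ?h1 ?h2 ?h3. Qed.
End TevalGen.

Lemma lin_comp (K : fieldType) (V W : lmodType K) (f : W -> K) (h : V -> W) :
  lin f -> klinear h -> lin (fun x => f (h x)).
Proof. by move=> hf hh a x y; rewrite hh hf. Qed.

Lemma lin_add (K : fieldType) (V : lmodType K) (f g : V -> K) : lin f -> lin g -> lin (fun x => f x + g x).
Proof. by move=> hf hg a x y; rewrite hf hg mulrDr addrACA. Qed.

Lemma lin_scale (K : fieldType) (V : lmodType K) (f : V -> K) c : lin f -> lin (fun x => c * f x).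
Proof. by move=> hf a x y; rewrite hf mulrDr !mulrA [c * a]mulrC. Qed.

Lemma lin_sumf (K : fieldType) (V : lmodType K) (I : Type) (r : seq I) (F : I -> V -> K) :
  (forall i, lin (F i)) -> lin (fun x => \sum_(i <- r) F i x).
Proof.
move=> hF a x y; rewrite mulr_sumr -big_split /=; apply: eq_bigr => i _; by rewrite hF.
Qed.

Lemma klin_comp (K : fieldType) (V W Z : lmodType K) (f : W -> Z) (h : V -> W) :
  klinear f -> klinear h -> klinear (fun x => f (h x)).
Proof. by move=> hf hh a x y; rewrite hh hf. Qed.

Lemma teval_ext (K : fieldType) (X Y : lmodType K) (f1 f2 : X -> Y -> K) w :
  (forall x y, f1 x y = f2 x y) -> teval f1 w = teval f2 w.
Proof. by move=> h; apply: eq_bigr => p _; rewrite h. Qed.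

Lemma teval_linf (K : fieldType) (X Y : lmodType K) (f1 f2 : X -> Y -> K) c w :
  teval (fun x y => c * f1 x y + f2 x y) w = c * teval f1 w + teval f2 w.
Proof. by rewrite /teval big_split /= mulr_sumr. Qed.

Section Alg.
Variables (K : fieldType) (q : K) (A R : unitAlgType K) (U V : A) (u : R) (s : R -> A).
Hypotheses (hq : q != 0) (hU : U \is a GRing.unit) (hV : V \is a GRing.unit)
  (hUV : U * V = q *: (V * U))
  (hA : is_basis (fun nm : int * int => U ^ nm.1 * V ^ nm.2))
  (hu : u \is a GRing.unit) (hR : is_basis (fun n : int => u ^ n))
  (hs : is_algmap s) (hsu : s u = U).

Lemma qU : q \is a GRing.unit. Proof. by rewrite unitfE. Qed.

Lemma qXD (a b : int) : q ^ (a + b) = q ^ a * q ^ b.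
Proof. exact: (exprzDr qU). Qed.

Lemma UXD (a b : int) : U ^ (a + b) = U ^ a * U ^ b.
Proof. exact: exprzDr. Qed.
Lemma VXD (a b : int) : V ^ (a + b) = V ^ a * V ^ b.
Proof. exact: exprzDr. Qed.
Lemma uXD (a b : int) : u ^ (a + b) = u ^ a * u ^ b.
Proof. exact: exprzDr. Qed.

Lemma s_lin : klinear s. Proof. by case: hs. Qed.
Lemma sM x y : s (x * y) = s x * s y. Proof. by case: hs. Qed.
Lemma s1 : s 1 = 1. Proof. by case: hs. Qed.

Lemma sV x : x \is a GRing.unit -> s (x^-1) = (s x)^-1.
Proof.
move=> hx; have hsx : s x * s (x^-1) = 1 by rewrite -sM mulrV // s1.
have ux : s x \is a GRing.unit.
  apply/unitrP; exists (s x^-1); split => //; by rewrite -sM mulVr // s1.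
by rewrite -[LHS]mul1r -(mulVr ux) -mulrA hsx mulr1.
Qed.

Lemma sXn x (n : nat) : s (x ^+ n) = s x ^+ n.
Proof. elim: n => [|n IH]; by rewrite ?expr0 ?s1 // !exprS sM IH. Qed.

Lemma sX (n : int) : s (u ^ n) = U ^ n.
Proof.
case: n => n; first by rewrite /= sXn hsu.
by rewrite /exprz sV ?unitrX // sXn hsu.
Qed.

Lemma VUV : V * U * V^-1 = q^-1 *: U.
Proof.
apply: (mulIr hV); rewrite mulrVK // -scalerAl; apply: (scalerI hq).
by rewrite scalerA mulfV // scale1r hUV.
Qed.

Lemma VUa (a : int) : V * U ^ a = q ^ (- a) *: (U ^ a * V).
Proof.
have := conjXz a hV hU; rewrite VUV exprzZ ?unitfE ?invr_eq0 // => e.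
rewrite exprz_inv in e.
by rewrite -[V * U ^ a](mulrVK hV) -e -scalerAl.
Qed.

Lemma VmUa (m a : int) : V ^ m * U ^ a = q ^ (- (m * a)) *: (U ^ a * V ^ m).
Proof.
set W := U ^ a; have hW : W \is a GRing.unit by exact: unitrXz.
have e1 : W^-1 * V * W = q ^ (- a) *: V.
  by rewrite -mulrA VUa -scalerAr mulKr.
have hW' : W^-1 \is a GRing.unit by rewrite unitrV.
have := conjXz m hW' hV; rewrite invrK e1 exprzZ ?unitfE ?expfz_neq0 // => e.
rewrite exprz_exp (_ : - a * m = - (m * a)) in e; last by rewrite mulNr mulrC.
by rewrite -[V ^ m * W](mulVKr hW) [W^-1 * _]mulrA -e -scalerAr.
Qed.

Definition B (nm : int * int) := U ^ nm.1 * V ^ nm.2.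

Lemma Bmul n m a b : B (n, m) * B (a, b) = q ^ (- (m * a)) *: B (n + a, m + b).
Proof.
rewrite /B /= mulrA -[U ^ n * V ^ m * U ^ a]mulrA VmUa -scalerAr -scalerAl.
by rewrite !mulrA -UXD -mulrA -VXD.
Qed.

Lemma UB c n m : U ^ c * B (n, m) = B (c + n, m).
Proof. by rewrite /B /= mulrA -UXD. Qed.

Lemma BU n m c : B (n, m) * U ^ c = q ^ (- (m * c)) *: B (n + c, m).
Proof. by rewrite /B /= -mulrA VmUa -scalerAr mulrA -UXD. Qed.

Lemma B00 : B (0, 0) = 1. Proof. by rewrite /B /= !expr0z mulr1. Qed.
Lemma B0m m : B (0, m) = V ^ m. Proof. by rewrite /B /= expr0z mul1r. Qed.
Lemma Bn0 n : B (n, 0) = U ^ n. Proof. by rewrite /B /= expr0z mulr1. Qed.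

Lemma Rspan (x : R) : exists (S : seq int) (c : int -> K), x = \sum_(i <- S) c i *: u ^ i.
Proof. exact: hR.1. Qed.
Lemma Aspan (x : A) : exists (S : seq (int * int)) (c : int * int -> K), x = \sum_(i <- S) c i *: B i.
Proof. exact: hA.1. Qed.

Lemma mull_klin (x : R) : klinear (fun y : R => x * y).
Proof. by move=> a y z; rewrite mulrDr scalerAr. Qed.
Lemma mulr_klin (x : R) : klinear (fun y : R => y * x).
Proof. by move=> a y z; rewrite mulrDl scalerAl. Qed.

Lemma Rcomm (x y : R) : x * y = y * x.
Proof.
move: x; apply: (ext_basis Rspan (mulr_klin _) (mull_klin _)) => i.
move: y; apply: (ext_basis Rspan (mull_klin _) (mulr_klin _)) => j.
by rewrite -!uXD addrC.
Qed.

Lemma sC x y : s x * s y = s y * s x.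
Proof. by rewrite -!sM Rcomm. Qed.

Lemma mulAl_klin (x : A) : klinear (fun y : A => x * y).
Proof. by move=> a y z; rewrite mulrDr scalerAr. Qed.
Lemma mulAr_klin (x : A) : klinear (fun y : A => y * x).
Proof. by move=> a y z; rewrite mulrDl scalerAl. Qed.

Variables (Dl : A -> seq (A * A)) (eps : A -> R) (dlt : A -> R) (act : R -> A -> R).
Hypotheses (hDl : forall a k k', teqR s s (Dl (a *: k + k')) (tscale a (Dl k) ++ Dl k'))
 (hDlB : forall n m : int, teqR s s (Dl (U ^ n * V ^ m)) [:: (U ^ n * V ^ m, V ^ m)])
 (heps : klinear eps) (hepsB : forall n m : int, eps (U ^ n * V ^ m) = u ^ n)
 (hdlt : klinear dlt) (hdltB : forall n m : int, dlt (U ^ n * V ^ m) = q ^ (n * m) *: u ^ n)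
 (hact : kbilinear act)
 (hactB : forall k n m : int, act (u ^ k) (U ^ n * V ^ m) = q ^ ((k + n) * m) *: u ^ (k + n)).

Definition balR (g : A -> A -> K) := bal2 (raR s) (laR s) g.
Definition balRop (g : A -> A -> K) := bal2 (raRop s) (laRop s) g.

Lemma balR_b g : balR g -> forall r x y, g (s r * x) y = g x (s r * y).
Proof. by move=> hg r x y; apply: (bal_b hg x r y). Qed.

Lemma balR_l g : balR g -> forall y, lin (fun x => g x y).
Proof. move=> hg; exact: (bal_l hg). Qed.
Lemma balR_r g : balR g -> forall x, lin (fun y => g x y).
Proof. move=> hg; exact: (bal_r hg). Qed.

Lemma balR_intro (g : A -> A -> K) : (forall y, lin (fun x => g x y)) ->
  (forall x, lin (fun y => g x y)) -> (forall r x y, g (s r * x) y = g x (s r * y)) -> balR g.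
Proof. by move=> h1 h2 h3; apply: bal2_intro => // x r y; apply: h3. Qed.

Definition Phi (g : A -> A -> K) (x : A) := teval g (Dl x).

Lemma Phi_lin g : balR g -> lin (Phi g).
Proof.
move=> hg a x y; by rewrite /Phi (hDl a x y hg) teval_cat (teval_tscale _ _ hg).
Qed.

Lemma Phi_B g n m : balR g -> Phi g (B (n, m)) = g (B (n, m)) (V ^ m).
Proof. by move=> hg; rewrite /Phi (hDlB n m hg) teval_seq1. Qed.

Lemma Phi_Bi g i : balR g -> Phi g (B i) = g (B i) (V ^ i.2).
Proof. by case: i => n m; apply: Phi_B. Qed.

Lemma s_klin : klinear s. Proof. exact: s_lin. Qed.

Lemma Phi_sB g r i : balR g -> Phi g (s r * B i) = g (s r * B i) (V ^ i.2).
Proof.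
move=> hg; case: i => n m /=; move: r.
apply: (ext_basisK Rspan).
- apply: lin_comp; first exact: Phi_lin.
  exact: (klin_comp (mulAr_klin _) s_klin).
- apply: (lin_comp (balR_l hg (V ^ m))).
  exact: (klin_comp (mulAr_klin _) s_klin).
move=> c; by rewrite sX UB Phi_B.
Qed.

Lemma D_bimod r1 r2 k :
  teqR s s (Dl (s r1 * s r2 * k)) [seq (s r1 * p.1, s r2 * p.2) | p <- Dl k].
Proof.
move=> g hg; rewrite teval_map.
have hg' : balR (fun x y => g (s r1 * x) (s r2 * y)).
  apply: balR_intro.
  - move=> y; apply: (lin_comp (balR_l hg (s r2 * y))); exact: mulAl_klin.
  - move=> x; apply: (lin_comp (balR_r hg (s r1 * x))); exact: mulAl_klin.
  - move=> r x y; by rewrite mulrA sC -mulrA balR_b // mulrA sC -mulrA.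
change (Phi g (s r1 * s r2 * k) = Phi (fun x y => g (s r1 * x) (s r2 * y)) k).
move: k; apply: (ext_basisK Aspan).
- apply: lin_comp; first exact: Phi_lin.
  exact: mulAl_klin.
- exact: Phi_lin.
move=> i; by rewrite Phi_Bi // -sM Phi_sB // sM -balR_b // mulrA sC.
Qed.

Lemma epsB i : eps (B i) = u ^ i.1.
Proof. by case: i => n m; apply: hepsB. Qed.

Lemma eps_sB r i : eps (s r * B i) = r * u ^ i.1.
Proof.
move: r; apply: (ext_basis Rspan).
- exact: (klin_comp heps (klin_comp (mulAr_klin _) s_klin)).
- exact: mulr_klin.
move=> c; case: i => n m; by rewrite sX UB epsB /= uXD.
Qed.

Lemma e_bimod r1 r2 k : eps (s r1 * s r2 * k) = r1 * eps k * r2.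
Proof.
move: k; apply: (ext_basis Aspan).
- exact: (klin_comp heps (mulAl_klin _)).
- exact: (klin_comp (mulr_klin _) (klin_comp (mull_klin _) heps)).
move=> i; by rewrite -sM eps_sB epsB -!mulrA [r2 * _]Rcomm.
Qed.

Lemma eps_s r k : eps (s r * k) = r * eps k.
Proof. by rewrite -[s r]mulr1 -s1 e_bimod mulr1. Qed.

Lemma eps_sr r : eps (s r) = r.
Proof. by rewrite -[s r]mulr1 -B00 eps_s epsB expr0z mulr1. Qed.

Lemma counit_l k : \sum_(p <- Dl k) s (eps p.1) * p.2 = k.
Proof.
apply: (sep hA) => F hF; rewrite (lin_sum hF).
have hG : balR (fun x y => F (s (eps x) * y)).
  apply: balR_intro.
  - move=> y; apply: (lin_comp hF); exact: (klin_comp (mulAr_klin _) (klin_comp s_klin heps)).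
  - move=> x; apply: (lin_comp hF); exact: mulAl_klin.
  - by move=> r x y; rewrite eps_s sM sC -mulrA.
change (Phi (fun x y => F (s (eps x) * y)) k = F k).
move: k; apply: (ext_basisK Aspan); [exact: Phi_lin|exact: hF|].
move=> i; by rewrite Phi_Bi // epsB sX.
Qed.

Lemma counit_r k : \sum_(p <- Dl k) s (eps p.2) * p.1 = k.
Proof.
apply: (sep hA) => F hF; rewrite (lin_sum hF).
have hG : balR (fun x y => F (s (eps y) * x)).
  apply: balR_intro.
  - move=> y; apply: (lin_comp hF); exact: mulAl_klin.
  - move=> x; apply: (lin_comp hF); exact: (klin_comp (mulAr_klin _) (klin_comp s_klin heps)).
  - by move=> r x y; rewrite eps_s sM sC mulrA.
change (Phi (fun x y => F (s (eps y) * x)) k = F k).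
move: k; apply: (ext_basisK Aspan); [exact: Phi_lin|exact: hF|].
move=> i; by rewrite Phi_Bi // -B0m epsB /= expr0z s1 mul1r.
Qed.

Lemma gZl g : balR g -> forall a x y, g (a *: x) y = a * g x y.
Proof. by move=> hg a x y; rewrite (linZ (balR_l hg y)). Qed.
Lemma gZr g : balR g -> forall a x y, g x (a *: y) = a * g x y.
Proof. by move=> hg a x y; rewrite (linZ (balR_r hg x)). Qed.

Lemma takeuchi k r :
  teqR s s [seq (p.1 * s r, p.2) | p <- Dl k] [seq (p.1, p.2 * s r) | p <- Dl k].
Proof.
move=> g hg.
rewrite (teval_map _ (fun x => x * s r) (fun y => y)) (teval_map _ (fun x => x) (fun y => y * s r)).
have h1 : balR (fun x y => g (x * s r) y).
  apply: balR_intro.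
  - move=> y; apply: (lin_comp (balR_l hg y)); exact: mulAr_klin.
  - move=> x; exact: (balR_r hg).
  - by move=> r' x y; rewrite -mulrA balR_b.
have h2 : balR (fun x y => g x (y * s r)).
  apply: balR_intro.
  - move=> y; exact: (balR_l hg).
  - move=> x; apply: (lin_comp (balR_r hg x)); exact: mulAr_klin.
  - by move=> r' x y; rewrite balR_b // mulrA.
change (Phi (fun x y => g (x * s r) y) k = Phi (fun x y => g x (y * s r)) k).
move: k; apply: (ext_basisK Aspan); [exact: Phi_lin|exact: Phi_lin|].
move=> [n m]; rewrite !Phi_B //; clear h1 h2; move: r.
apply: (ext_basisK Rspan).
- apply: (lin_comp (balR_l hg _)); exact: (klin_comp (mulAl_klin _) s_klin).
- apply: (lin_comp (balR_r hg _)); exact: (klin_comp (mulAl_klin _) s_klin).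
move=> c; rewrite sX BU VmUa !gZl ?gZr //; congr (_ * _).
by rewrite -sX -balR_b // sX UB addrC.
Qed.

Lemma D1 : teqR s s (Dl 1) [:: (1, 1)].
Proof.
move=> g hg; have := hDlB 0 0 hg; rewrite !expr0z mulr1 => ->; by [].
Qed.

Lemma emul k k' : eps (k * k') = eps (k * s (eps k')).
Proof.
move: k'; apply: (ext_basis Aspan).
- exact: (klin_comp heps (mulAl_klin _)).
- exact: (klin_comp heps (klin_comp (mulAl_klin _) (klin_comp s_klin heps))).
move=> [a b]; rewrite epsB sX /=; move: k; apply: (ext_basis Aspan).
- exact: (klin_comp heps (mulAr_klin _)).
- exact: (klin_comp heps (mulAr_klin _)).
move=> [n m]; by rewrite Bmul BU (klinZ heps) (klinZ heps) !epsB.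
Qed.

Lemma Phi_sl h r x : balR h -> Phi h (s r * x) = Phi (fun a b => h a (s r * b)) x.
Proof.
move=> hh; have := D_bimod 1 r x hh; rewrite s1 !mul1r /Phi => ->.
by rewrite teval_map; apply: teval_ext => a b; rewrite mul1r.
Qed.

Lemma Phi_sr h r x : balR h -> Phi h (s r * x) = Phi (fun a b => h (s r * a) b) x.
Proof.
move=> hh; have := D_bimod r 1 x hh; rewrite s1 !mulr1 /Phi => ->.
by rewrite teval_map; apply: teval_ext => a b; rewrite mul1r.
Qed.

Lemma Phi_ext h1 h2 x : (forall a b, h1 a b = h2 a b) -> Phi h1 x = Phi h2 x.
Proof. by move=> e; apply: teval_ext. Qed.

Lemma coassoc k f : bal3R s s f ->
    \sum_(p <- Dl k) \sum_(p' <- Dl p.1) f p'.1 p'.2 p.2 =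
    \sum_(p <- Dl k) \sum_(p' <- Dl p.2) f p.1 p'.1 p'.2.
Proof.
case=> l1 l2 l3 b1 b2.
have hA1 : forall y, balR (fun a b => f a b y).
  move=> y; apply: balR_intro => [b|a|r a b].
  - by move=> c x1 x2; rewrite l1.
  - by move=> c x1 x2; rewrite l2.
  - exact: b1.
have hA2 : forall x, balR (fun a b => f x a b).
  move=> x; apply: balR_intro => [b|a|r a b].
  - by move=> c x1 x2; rewrite l2.
  - by move=> c x1 x2; rewrite l3.
  - exact: b2.
have hG1 : balR (fun x y => Phi (fun a b => f a b y) x).
  apply: balR_intro => [y|x|r x y].
  - exact: Phi_lin.
  - move=> c y1 y2; rewrite /Phi -teval_linf; apply: teval_ext => a b; exact: l3.
  - rewrite Phi_sl //; apply: Phi_ext => a b; exact: b2.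
have hG2 : balR (fun x y => Phi (fun a b => f x a b) y).
  apply: balR_intro => [y|x|r x y].
  - move=> c x1 x2; rewrite /Phi -teval_linf; apply: teval_ext => a b; exact: l1.
  - exact: Phi_lin.
  - rewrite Phi_sr //; apply: Phi_ext => a b; exact: b1.
change (Phi (fun x y => Phi (fun a b => f a b y) x) k = Phi (fun x y => Phi (fun a b => f x a b) y) k).
move: k; apply: (ext_basisK Aspan); [exact: Phi_lin|exact: Phi_lin|].
move=> [n m]; by rewrite !Phi_B // -B0m Phi_B // B0m.
Qed.

Lemma J_bal g k : balR g -> balR (fun a b => Phi (fun x y => g (x * a) (y * b)) k).
Proof.
move=> hg.
have hgab : forall a b, balR (fun x y => g (x * a) (y * b)).
  move=> a b; apply: balR_intro => [y|x|r x y].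
  - apply: (lin_comp (balR_l hg _)); exact: mulAr_klin.
  - apply: (lin_comp (balR_r hg _)); exact: mulAr_klin.
  - by rewrite -mulrA balR_b // mulrA.
apply: balR_intro => [b|a|r a b].
- move=> c x1 x2; rewrite /Phi -teval_linf; apply: teval_ext => x y.
  by rewrite mulrDr -scalerAr (linD (balR_l hg _)) gZl.
- move=> c x1 x2; rewrite /Phi -teval_linf; apply: teval_ext => x y.
  by rewrite mulrDr -scalerAr (linD (balR_r hg _)) gZr.
move: k; apply: (ext_basisK Aspan); [exact: Phi_lin|exact: Phi_lin|].
move=> [n m]; rewrite !Phi_B //; move: r; apply: (ext_basisK Rspan).
- apply: (lin_comp (balR_l hg _)).
  exact: (klin_comp (mulAl_klin _) (klin_comp (mulAr_klin _) s_klin)).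
- apply: (lin_comp (balR_r hg _)).
  exact: (klin_comp (mulAl_klin _) (klin_comp (mulAr_klin _) s_klin)).
move=> c; rewrite sX mulrA BU mulrA VmUa -!scalerAl gZl ?gZr //; congr (_ * _).
by rewrite -[U ^ c * V ^ m * b]mulrA -[U ^ c]sX -(balR_b hg) sX mulrA UB addrC.
Qed.

Lemma Dmul k k' :
  teqR s s (Dl (k * k')) [seq (p.1 * p'.1, p.2 * p'.2) | p <- Dl k, p' <- Dl k'].
Proof.
move=> g hg; rewrite /teval big_allpairs_dep /= exchange_big /=.
have hgab : forall a b, balR (fun x y => g (x * a) (y * b)).
  move=> a b; apply: balR_intro => [y|x|r x y].
  - apply: (lin_comp (balR_l hg _)); exact: mulAr_klin.
  - apply: (lin_comp (balR_r hg _)); exact: mulAr_klin.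
  - by rewrite -mulrA balR_b // mulrA.
change (Phi g (k * k') = Phi (fun a b => Phi (fun x y => g (x * a) (y * b)) k) k').
move: k'; apply: (ext_basisK Aspan).
- apply: lin_comp; [exact: Phi_lin|exact: mulAl_klin].
- exact: (Phi_lin (J_bal k hg)).
move=> [a b]; rewrite Phi_B; last exact: (J_bal k hg).
move: k; apply: (ext_basisK Aspan).
- apply: lin_comp; [exact: Phi_lin|exact: mulAr_klin].
- exact: Phi_lin.
move=> [n m]; rewrite Phi_B // Bmul (linZ (Phi_lin hg)) Phi_B // gZl //.
by rewrite -VXD.
Qed.

Lemma bialg : left_bialgebroid s s Dl eps.
Proof.
split.
- exact: hs.
- split; [exact: s_lin| |exact: s1]; by move=> x y; rewrite Rcomm sM.
- exact: sC.
- exact: hDl.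
- exact: D_bimod.
- exact: heps.
- exact: e_bimod.
- exact: coassoc.
- exact: counit_l.
- exact: counit_r.
- exact: takeuchi.
- exact: D1.
- exact: Dmul.
- by rewrite -B00 epsB expr0z.
- exact: emul.
Qed.

Lemma balRop_intro (h : A -> A -> K) : (forall y, lin (fun x => h x y)) ->
  (forall x, lin (fun y => h x y)) -> (forall r x y, h (x * s r) y = h x (s r * y)) -> balRop h.
Proof. by move=> h1 h2 h3; apply: bal2_intro => // x r y; apply: h3. Qed.

Lemma balRop_l g : balRop g -> forall y, lin (fun x => g x y).
Proof. move=> hg; exact: (bal_l hg). Qed.
Lemma balRop_r g : balRop g -> forall x, lin (fun y => g x y).
Proof. move=> hg; exact: (bal_r hg). Qed.
Lemma balRop_b g : balRop g -> forall r x y, g (x * s r) y = g x (s r * y).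
Proof. by move=> hg r x y; apply: (bal_b hg x r y). Qed.

Definition Nf (g : A -> A -> K) x y := Phi (fun a b => g a (b * y)) x.

Lemma teval_nu g w : teval g (nu Dl w) = teval (Nf g) w.
Proof. by rewrite /teval /nu big_allpairs_dep. Qed.

Lemma balR_ry g y : balR g -> balR (fun a b => g a (b * y)).
Proof.
move=> hg; apply: balR_intro => [b|a|r a b].
- exact: (balR_l hg _).
- apply: (lin_comp (balR_r hg a)); exact: mulAr_klin.
- by rewrite balR_b // mulrA.
Qed.

Lemma qXN (a : int) : q ^ a * q ^ (- a) = 1.
Proof. by rewrite -qXD addrN expr0z. Qed.

Lemma Nf_bal g : balR g -> balRop (Nf g).
Proof.
move=> hg; apply: balRop_intro => [y|x|r x y].
- exact: (Phi_lin (balR_ry y hg)).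
- move=> c y1 y2; rewrite /Nf /Phi -teval_linf; apply: teval_ext => a b.
  by rewrite mulrDr -scalerAr (linD (balR_r hg _)) gZr.
move: x; apply: (ext_basisK Aspan).
- apply: lin_comp; [exact: (Phi_lin (balR_ry y hg))|exact: mulAr_klin].
- exact: (Phi_lin (balR_ry _ hg)).
move=> [n m]; rewrite /Nf Phi_B; last exact: (balR_ry _ hg).
move: r; apply: (ext_basisK Rspan).
- apply: lin_comp; [exact: (Phi_lin (balR_ry y hg))|].
  exact: (klin_comp (mulAl_klin _) s_klin).
- apply: (lin_comp (balR_r hg _)).
  exact: (klin_comp (mulAl_klin _) (klin_comp (mulAr_klin _) s_klin)).
move=> c; rewrite sX BU (linZ (Phi_lin (balR_ry y hg))) Phi_B; last exact: (balR_ry _ hg).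
rewrite mulrA VmUa -!scalerAl gZr //; congr (_ * _).
by rewrite -mulrA -[U ^ c]sX -(balR_b hg) sX UB addrC.
Qed.

Section Ginv.
Variable h : A -> A -> K.
Hypothesis hh : balRop h.

Definition ginv (x y : A) : K := linext hA (fun i => h (B i) (V ^ (- i.2) * y)) x.

Lemma ginv_B i y : ginv (B i) y = h (B i) (V ^ (- i.2) * y).
Proof. exact: (linext_b hA). Qed.

Lemma ginv_l y : lin (fun x => ginv x y).
Proof. exact: linext_lin. Qed.

Lemma ginv_bal : balR ginv.
Proof.
apply: balR_intro => [y|x|r x y].
- exact: ginv_l.
- move=> c y1 y2; move: x; apply: (ext_basisK Aspan).
  + apply: ginv_l.
  + apply: lin_add; [apply: lin_scale|]; apply: ginv_l.
  move=> i; rewrite !ginv_B; by rewrite mulrDr -scalerAr (linD (balRop_r hh _)) (linZ (balRop_r hh _)).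
move: x; apply: (ext_basisK Aspan).
- apply: (lin_comp (ginv_l y)); exact: mulAl_klin.
- exact: ginv_l.
move=> [n m]; rewrite ginv_B /=; move: r; apply: (ext_basisK Rspan).
- apply: (lin_comp (ginv_l y)); exact: (klin_comp (mulAr_klin _) s_klin).
- apply: (lin_comp (balRop_r hh _)).
  exact: (klin_comp (mulAl_klin _) (klin_comp (mulAr_klin _) s_klin)).
move=> c; rewrite sX UB ginv_B /= mulrA VmUa -scalerAl (linZ (balRop_r hh _)).
rewrite -mulrA -[U ^ c]sX -(balRop_b hh) sX BU (linZ (balRop_l hh _)) mulrA.
by rewrite mulNr opprK qXN mul1r addrC.
Qed.

Lemma ginv_nu w : teval ginv (nu Dl w) = teval h w.
Proof.
rewrite teval_nu; apply: teval_ext => x y; move: x.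
apply: (ext_basisK Aspan); [exact: (Phi_lin (balR_ry y ginv_bal))|exact: (balRop_l hh _)|].
move=> [n m]; rewrite /Nf Phi_B; last exact: (balR_ry _ ginv_bal).
rewrite ginv_B /=.
by rewrite mulrA -VXD addNr expr0z mul1r.
Qed.
End Ginv.

Lemma nu_bij : nu_bijective s s Dl.
Proof.
split.
- move=> w w' e g hg; rewrite !teval_nu; apply: e; exact: Nf_bal.
- move=> w w' e h hh; rewrite -!(ginv_nu hh); apply: e; exact: ginv_bal.
elim=> [|[x y] z [w' IH]].
  by exists [::].
have [S [c ex]] := Aspan x.
exists ([seq (c i *: B i, V ^ (- i.2) * y) | i <- S] ++ w') => g hg.
rewrite teval_nu teval_cat -[teval (Nf g) w']teval_nu (IH g hg) /teval big_cons /=; congr (_ + _).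
rewrite big_map ex (lin_sum (balR_l hg y)); apply: eq_bigr => i _ /=.
rewrite /Nf (linZ (Phi_lin (balR_ry _ hg))) Phi_Bi; last exact: (balR_ry _ hg).
rewrite gZl //.
by rewrite mulrA -VXD addrN expr0z mul1r.
Qed.

Lemma hopf : left_xR_Hopf s s Dl eps.
Proof. split; [exact: bialg|exact: nu_bij]. Qed.

Lemma dltB i : dlt (B i) = q ^ (i.1 * i.2) *: u ^ i.1.
Proof. by case: i => n m; apply: hdltB. Qed.

Lemma rchar : right_character s dlt.
Proof.
split.
- move=> k r; move: k; apply: (ext_basis Aspan).
  + exact: (klin_comp hdlt (mulAr_klin _)).
  + exact: (klin_comp (mulr_klin _) hdlt).
  move=> [n m]; move: r; apply: (ext_basis Rspan).
  + exact: (klin_comp hdlt (klin_comp (mulAl_klin _) s_klin)).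
  + exact: mull_klin.
  move=> c; rewrite sX BU (klinZ hdlt) !dltB /= scalerA -scalerAl -uXD -qXD.
  by congr (q ^ _ *: _); ring.
- move=> k1 k2; move: k2; apply: (ext_basis Aspan).
  + exact: (klin_comp hdlt (mulAl_klin _)).
  + exact: (klin_comp hdlt (mulAl_klin _)).
  move=> [a b]; move: k1; apply: (ext_basis Aspan).
  + exact: (klin_comp hdlt (mulAr_klin _)).
  + exact: (klin_comp hdlt (klin_comp (mulAr_klin _) (klin_comp s_klin hdlt))).
  move=> [n m]; rewrite Bmul dltB (klinZ hdlt) (klinZ s_klin) sX -scalerAl UB.
  rewrite (klinZ hdlt) !dltB /= !scalerA -!qXD.
  by congr (q ^ _ *: u ^ _); ring.
- by rewrite -B00 dltB /= mul0r !expr0z scale1r.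
Qed.

Lemma act_l w : klinear (fun x => act x w).
Proof. by move=> a x y; rewrite hact.1. Qed.
Lemma act_r v : klinear (fun x => act v x).
Proof. by move=> a x y; rewrite hact.2. Qed.

Lemma actB k i : act (u ^ k) (B i) = q ^ ((k + i.1) * i.2) *: u ^ (k + i.1).
Proof. by case: i => n m; apply: hactB. Qed.

Lemma act1B i : act 1 (B i) = q ^ (i.1 * i.2) *: u ^ i.1.
Proof. by rewrite -(expr0z u) actB !add0r. Qed.

Lemma actsE m r : act m (s r) = m * r.
Proof.
move: m; apply: (ext_basis Rspan); [exact: act_l|exact: mulr_klin|].
move=> k; move: r; apply: (ext_basis Rspan).
- exact: (klin_comp (act_r _) s_klin).
- exact: mull_klin.
move=> c; by rewrite sX -Bn0 actB /= mulr0 expr0z scale1r uXD.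
Qed.

Lemma act_1 m : act m 1 = m.
Proof. by rewrite -s1 actsE mulr1. Qed.

Lemma actM m k k' : act (act m k) k' = act m (k * k').
Proof.
move: k'; apply: (ext_basis Aspan).
- exact: act_r.
- exact: (klin_comp (act_r _) (mulAl_klin _)).
move=> [a b]; move: k; apply: (ext_basis Aspan).
- exact: (klin_comp (act_l _) (act_r _)).
- exact: (klin_comp (act_r _) (mulAr_klin _)).
move=> [n M]; move: m; apply: (ext_basis Rspan).
- exact: (klin_comp (act_l _) (act_l _)).
- exact: act_l.
move=> j; rewrite Bmul (klinZ (act_r _)) actB /= (klinZ (act_l _)) actB /= actB /=.
rewrite !scalerA -!qXD !addrA; by congr (q ^ _ *: _); ring.
Qed.

Definition balM (f : A -> R -> K) := bal2 (raR s) (laM s act) f.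
Lemma balM_b f : balM f -> forall r x y, f (s r * x) y = f x (y * r).
Proof. by move=> hf r x y; rewrite -actsE; apply: (bal_b hf x r y). Qed.
Lemma balM_l f : balM f -> forall y, lin (fun x => f x y).
Proof. move=> hf; exact: (bal_l hf). Qed.
Lemma balM_r f : balM f -> forall x, lin (fun y => f x y).
Proof. move=> hf; exact: (bal_r hf). Qed.

Lemma eps_s1 m : eps (s m) = m.
Proof. exact: eps_sr. Qed.

Section AYD.
Variables (nuinv : A -> seq (A * A)).
Hypothesis hnu : forall k, teqR s s (nu Dl (nuinv k)) [:: (k, 1)].
Variables (m : R) (f : A -> R -> K).
Hypothesis hf : balM f.

Definition hx (x : A) := fun a b => f (b * s m * x) (act 1 a).

Lemma hx_bal x : balRop (hx x).
Proof.
apply: balRop_intro => [b|a|r a b].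
- apply: (lin_comp (balM_r hf _)); exact: act_r.
- apply: (lin_comp (balM_l hf _)).
  exact: (klin_comp (mulAr_klin _) (mulAr_klin _)).
- by rewrite /hx -!mulrA balM_b // -[act 1 a * r]actsE actM.
Qed.

Definition Q x y := teval (hx x) (nuinv y).

Lemma hQ x y : Q x y = ginv (hx x) y 1.
Proof.
rewrite /Q -(ginv_nu (hx_bal x)) (hnu y (ginv_bal (hx_bal x))).
by rewrite teval_seq1.
Qed.

Lemma Q_bal : balR Q.
Proof.
apply: balR_intro => [y|x|r x y].
- move=> c x1 x2; rewrite /Q /hx -teval_linf; apply: teval_ext => a b.
  by rewrite mulrDr -scalerAr (linD (balM_l hf _)) (linZ (balM_l hf _)).
- move=> c y1 y2; rewrite !hQ; exact: ginv_l.
rewrite !hQ; move: y; apply: (ext_basisK Aspan).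
- exact: ginv_l.
- apply: (lin_comp (ginv_l _ _)); exact: mulAl_klin.
move=> [n M]; rewrite ginv_B /hx /=; move: r; apply: (ext_basisK Rspan).
- apply: (lin_comp (balM_l hf _)).
  exact: (klin_comp (mulAl_klin _) (klin_comp (mulAr_klin _) s_klin)).
- apply: (lin_comp (ginv_l _ _)); exact: (klin_comp (mulAr_klin _) s_klin).
move=> c; rewrite sX UB ginv_B /= !mulr1 act1B act1B /=.
have e : V ^ (- M) * s m * (U ^ c * x) = q ^ (- (- M * c)) *: (U ^ c * (V ^ (- M) * s m * x)).
  rewrite -[U ^ c]sX mulrA -[_ * s m * s _]mulrA sC mulrA sX VmUa -!scalerAl.
  by rewrite !mulrA.
rewrite !(linZ (balM_r hf _)) e (linZ (balM_l hf _)) -[U ^ c]sX balM_b // -uXD mulrA -qXD.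
by rewrite [n + c]addrC; congr (q ^ _ * _); ring.
Qed.

Lemma AYD_main k : f (s (act m k)) 1 = Phi Q k.
Proof.
move: k; apply: (ext_basisK Aspan).
- apply: (lin_comp (balM_l hf _)); exact: (klin_comp s_klin (act_r _)).
- exact: (Phi_lin Q_bal).
move=> [n M]; rewrite Phi_B; last exact: Q_bal.
rewrite hQ -B0m ginv_B /hx /= act1B /= mul0r expr0z !expr0z scale1r mulr1.
move: m; apply: (ext_basisK Rspan).
- apply: (lin_comp (balM_l hf _)); exact: (klin_comp s_klin (act_l _)).
- apply: (lin_comp (balM_l hf _)).
  exact: (klin_comp (mulAr_klin _) (klin_comp (mulAl_klin _) s_klin)).
move=> j; rewrite actB /= (klinZ s_klin) sX sX -mulrA UB /B /= mulrA VmUa -scalerAl.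
rewrite -mulrA -VXD addNr expr0z mulr1.
by congr (f (q ^ _ *: _) 1); ring.
Qed.
End AYD.

Lemma sayd : SAYD s s Dl eps act (fun r : R => [:: (s r, 1)]).
Proof.
split.
- exact: hact.
- exact: act_1.
- exact: actM.
- move=> a x y f hf; rewrite /teval /tscale big_cat big_map !big_seq1 /=.
  by rewrite s_lin (linD (balM_l hf _)) (linZ (balM_l hf _)).
- move=> r x f hf; rewrite /teval big_map !big_seq1 /= /laM actsE sM sC.
  by [].
- move=> x f [l1 l2 l3 b1 b2]; rewrite !big_seq1 /= s1.
  have hb : balR (fun a b => f a b 1).
    apply: balR_intro => [b|a|r a b].
    + by move=> c x1 x2; rewrite l1.
    + by move=> c x1 x2; rewrite l2.
    + exact: b1.
  change (Phi (fun a b => f a b 1) (s x) = f (s x) 1 1).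
  move: x; apply: (ext_basisK Rspan).
  + apply: lin_comp; [exact: Phi_lin|exact: s_klin].
  + apply: (lin_comp (f := fun a => f a 1 1)); last exact: s_klin.
    by move=> c x1 x2; rewrite l1.
  by move=> c; rewrite sX -Bn0 Phi_B // expr0z.
- by move=> x; rewrite big_seq1 /laM /= eps_sr actsE mul1r.
- by move=> x r; rewrite big_seq1 /laM /= -sM eps_sr !actsE mul1r.
- move=> nuinv hnu x k f hf; rewrite teval_seq1 (@AYD_main nuinv hnu x f hf k).
  rewrite /Phi /teval big_flatten /= big_map; apply: eq_bigr => p _.
  rewrite big_flatten big_map /Q /teval; apply: eq_bigr => p2 _; by rewrite big_seq1.
- by move=> x; rewrite big_seq1 /= actsE mul1r.
Qed.

End Alg.

Theorem mainTheorem6 (K : fieldType) (q : K) (A R : unitAlgType K)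
    (U V : A) (u : R) (s : R -> A)
    (Dl : A -> seq (A * A)) (eps : A -> R) (dlt : A -> R)
    (act : R -> A -> R) :
  q != 0 ->
  (* A_theta : U, V invertible, U V = q V U, basis U^n V^m *)
  U \is a GRing.unit -> V \is a GRing.unit ->
  U * V = q *: (V * U) ->
  is_basis (fun nm : int * int => U ^ nm.1 * V ^ nm.2) ->
  (* R = K[u, u^-1], embedded by s with s(u) = U *)
  u \is a GRing.unit ->
  is_basis (fun n : int => u ^ n) ->
  is_algmap s -> s u = U ->
  (* Delta(U^n V^m) = U^n V^m (x)_R V^m, extended linearly *)
  (forall a k k', teqR s s (Dl (a *: k + k')) (tscale a (Dl k) ++ Dl k')) ->
  (forall n m : int, teqR s s (Dl (U ^ n * V ^ m)) [:: (U ^ n * V ^ m, V ^ m)]) ->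
  (* eps(U^n V^m) = U^n, extended linearly *)
  klinear eps ->
  (forall n m : int, eps (U ^ n * V ^ m) = u ^ n) ->
  (* delta(U^n V^m) = q^(nm) U^n, extended linearly *)
  klinear dlt ->
  (forall n m : int, dlt (U ^ n * V ^ m) = q ^ (n * m) *: u ^ n) ->
  (* U^k <| U^n V^m = q^((k+n)m) U^(k+n), extended bilinearly *)
  kbilinear act ->
  (forall k n m : int, act (u ^ k) (U ^ n * V ^ m) = q ^ ((k + n) * m) *: u ^ (k + n)) ->
  left_xR_Hopf s s Dl eps /\
  right_character s dlt /\
  SAYD s s Dl eps act (fun r : R => [:: (s r, 1)]).
Proof.
move=> hq hU hV hUV hA hu hR hs hsu hDl hDlB heps hepsB hdlt hdltB hact hactB.
split; last split.
- exact: (hopf hq hU hV hUV hA hu hR hs hsu hDl hDlB heps hepsB).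
- exact: (rchar hq hU hV hUV hA hu hR hs hsu hdlt hdltB).
- exact: (sayd hq hU hV hUV hA hu hR hs hsu hDl hDlB heps hepsB hact hactB).
Qed.
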